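(* Let $\Gamma$ be a Veldkamp $n$-gon ($n\ge2$), let $x,y$ be opposite vertices of $\Gamma$ and let $z\in\Gamma_y$. Then there exists a unique root $(x,\dots,z,y)$ from $x$ to $y$ whose penultimate vertex is $z$.
   Context: A graph is a pair $(V,E)$ with $E$ a set of $2$-element subsets of $V$; $\Gamma_v$ is the set of neighbors of $v$. An $s$-path is a sequence $(x_0,\dots,x_s)$ of vertices with consecutive vertices adjacent and $x_{i-2}\ne x_i$ for $i\in[2,s]$. A closed $s$-path is an $s$-path with $s\ge3$ whose first and last vertices coincide; an $s$-circuit is the subgraph determined by a closed $s$-path. An opposition relation on a set $X$ is a symmetric anti-reflexive relation; it is $k$-plump if for every $S\subseteq X$ with $|S|\le k$ some element of $X$ is related to all elements of $S$. A Veldkamp graph is a graph with a $2$-plump opposition relation $\equiv_v$ on $\Gamma_v$ for each vertex $v$. A path $(v_0,\dots,v_s)$ is straight if $v_{i-1}\equiv_{v_i}v_{i+1}$ for all $i\in[1,s-1]$; a circuit is straight if every path in it is straight. A Veldkamp $n$-gon ($n\ge2$) is a Veldkamp graph satisfying (VP1) connected and bipartite; (VP2) for each $k\in[1,n-1]$ each straight $k$-path is the unique straight path between its endpoints of length at most $k$; (VP3) every straight $(n+1)$-path lies in a straight $2n$-circuit. A root is a straight $n$-path; two vertices $x,y$ are opposite if there is a root from $x$ to $y$. *)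

(* Defs.v *)
From Stdlib Require Import List Arith Relations.
Import ListNotations.

Definition last_error {A : Type} (l : list A) : option A :=
  match l with [] => None | a :: t => Some (last t a) end.

Section Veldkamp.
Variable V : Type.
Variable adj : V -> V -> Prop.
Variable opp : V -> V -> V -> Prop.          (* opp v a b : a ≡_v b *)

(* (V,E) with E a set of 2-element subsets: symmetric irreflexive adjacency *)
Definition is_graph : Prop :=
  (forall x y, adj x y -> adj y x) /\ (forall x, ~ adj x x).

Definition opposition_on (v : V) : Prop :=
  (forall a b, opp v a b -> adj v a /\ adj v b) /\
  (forall a b, opp v a b -> opp v b a) /\
  (forall a, ~ opp v a a).

Definition plump (k : nat) (v : V) : Prop :=
  forall S : list V, length S <= k -> (forall s, In s S -> adj v s) ->
    exists c, adj v c /\ forall s, In s S -> opp v c s.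

Definition veldkamp_graph : Prop :=
  is_graph /\ forall v, opposition_on v /\ plump 2 v.

(* Paths are lists [x_0; ...; x_s] *)
Fixpoint chain_in (E : V -> V -> Prop) (l : list V) : Prop :=
  match l with
  | x :: ((y :: _) as t) => E x y /\ chain_in E t
  | _ => True
  end.

Fixpoint no_backtrack (l : list V) : Prop :=
  match l with
  | x :: ((y :: z :: _) as t) => x <> z /\ no_backtrack t
  | _ => True
  end.

Fixpoint straight_seq (l : list V) : Prop :=
  match l with
  | x :: ((y :: z :: _) as t) => opp y x z /\ straight_seq t
  | _ => True
  end.

Definition path_in (P : V -> Prop) (E : V -> V -> Prop) (s : nat) (l : list V) : Prop :=
  length l = S s /\ (forall x, In x l -> P x) /\ chain_in E l /\ no_backtrack l.

Definition path (s : nat) (l : list V) : Prop := path_in (fun _ => True) adj s l.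

Definition straight_path (s : nat) (l : list V) : Prop := path s l /\ straight_seq l.

Definition closed_path (s : nat) (l : list V) : Prop :=
  3 <= s /\ path s l /\ hd_error l = last_error l.

(* the subgraph (circuit) determined by a closed path c *)
Definition circ_vert (c : list V) (x : V) : Prop := In x c.
Definition circ_edge (c : list V) (x y : V) : Prop :=
  exists i, S i < length c /\
    ((nth_error c i = Some x /\ nth_error c (S i) = Some y) \/
     (nth_error c i = Some y /\ nth_error c (S i) = Some x)).

Definition straight_circuit (s : nat) (c : list V) : Prop :=
  closed_path s c /\
  forall k l, path_in (circ_vert c) (circ_edge c) k l -> straight_seq l.

Definition connected : Prop := forall x y, clos_refl_trans V adj x y.
Definition bipartite : Prop := exists col : V -> bool, forall x y, adj x y -> col x <> col y.

Definition veldkamp_ngon (n : nat) : Prop :=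
  2 <= n /\ veldkamp_graph /\
  (* VP1 *) connected /\ bipartite /\
  (* VP2 *) (forall k, 1 <= k <= n - 1 -> forall p, straight_path k p ->
               forall j q, j <= k -> straight_path j q ->
               hd_error q = hd_error p -> last_error q = last_error p -> q = p) /\
  (* VP3 *) (forall p, straight_path (S n) p ->
               exists c, straight_circuit (2 * n) c /\
                 path_in (circ_vert c) (circ_edge c) (S n) p).

Definition root (n : nat) (r : list V) : Prop := straight_path n r.

Definition opposite (n : nat) (x y : V) : Prop :=
  exists r, root n r /\ hd_error r = Some x /\ last_error r = Some y.

End Veldkamp.
Arguments veldkamp_ngon {V}.
Arguments root {V}.
Arguments opposite {V}.

(* Main.v *)
Require Import Defs.
From Stdlib Require Import List Arith Lia ZArith.
Import ListNotations.

Lemma chain_nth {V} (E : V -> V -> Prop) (l : list V) :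
  chain_in V E l <-> forall d i, S i < length l -> E (nth i l d) (nth (S i) l d).
Proof.
  induction l as [|a t IH]; simpl.
  - split; [intros _ d i H; lia | auto].
  - destruct t as [|b t']; simpl in *.
    + split; [intros _ d i H; lia | auto].
    + split.
      * intros [H1 H2] d [|i] Hi; [exact H1|]. apply (proj1 IH H2); simpl; lia.
      * intros H. split. apply (H a 0); lia.
        apply IH. intros d i Hi. apply (H d (S i)); simpl in *; lia.
Qed.

Lemma nb_nth {V} (l : list V) :
  no_backtrack V l <-> forall d i, S (S i) < length l -> nth i l d <> nth (S (S i)) l d.
Proof.
  induction l as [|a t IH]; simpl.
  - split; [intros _ d i H; lia | auto].
  - destruct t as [|b t']; simpl in *.
    + split; [intros _ d i H; lia | auto].
    + destruct t' as [|c t'']; simpl in *.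
      * split; [intros _ d i H; lia | auto].
      * split.
        -- intros [H1 H2] d [|i] Hi; [exact H1|]. apply (proj1 IH H2); simpl; lia.
        -- intros H. split. apply (H a 0); lia.
           apply IH. intros d i Hi. apply (H d (S i)); simpl in *; lia.
Qed.

Lemma st_nth {V} (opp : V -> V -> V -> Prop) (l : list V) :
  straight_seq V opp l <-> forall d i, S (S i) < length l -> opp (nth (S i) l d) (nth i l d) (nth (S (S i)) l d).
Proof.
  induction l as [|a t IH]; simpl.
  - split; [intros _ d i H; lia | auto].
  - destruct t as [|b t']; simpl in *.
    + split; [intros _ d i H; lia | auto].
    + destruct t' as [|c t'']; simpl in *.
      * split; [intros _ d i H; lia | auto].
      * split.
        -- intros [H1 H2] d [|i] Hi; [exact H1|]. apply (proj1 IH H2); simpl; lia.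
        -- intros H. split. apply (H a 0); lia.
           apply IH. intros d i Hi. apply (H d (S i)); simpl in *; lia.
Qed.

Lemma last_error_nth {V} (l : list V) d : l <> [] -> last_error l = Some (nth (pred (length l)) l d).
Proof.
  destruct l as [|a t]; [congruence|]. intros _. simpl.
  f_equal. revert a; induction t as [|b t IH]; intros a; simpl; auto.
  rewrite IH. destruct t; simpl; auto.
Qed.

Lemma hd_error_nth {V} (l : list V) d : l <> [] -> hd_error l = Some (nth 0 l d).
Proof. destruct l; simpl; congruence. Qed.

Lemma nth_app_lt {V} (l : list V) e d i : i < length l -> nth i (l ++ [e]) d = nth i l d.
Proof. intros; apply app_nth1; auto. Qed.
Lemma nth_app_eq {V} (l : list V) e d : nth (length l) (l ++ [e]) d = e.
Proof. rewrite app_nth2 by lia. rewrite Nat.sub_diag. reflexivity. Qed.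

Lemma sp_prefix {V} adj opp m (l : list V) a :
  straight_path V adj opp (S m) (l ++ [a]) -> straight_path V adj opp m l.
Proof.
  intros [[Hl [_ [Hc Hn]]] Hs].
  rewrite length_app in Hl; simpl in Hl.
  split; [split; [lia|split; [auto|split]]|].
  - apply chain_nth. intros d i Hi. rewrite chain_nth in Hc.
    specialize (Hc d i). rewrite !nth_app_lt in Hc by lia. apply Hc. rewrite length_app; simpl; lia.
  - apply nb_nth. intros d i Hi. rewrite nb_nth in Hn.
    specialize (Hn d i). rewrite !nth_app_lt in Hn by lia. apply Hn. rewrite length_app; simpl; lia.
  - apply st_nth. intros d i Hi. rewrite st_nth in Hs.
    specialize (Hs d i). rewrite !nth_app_lt in Hs by lia. apply Hs. rewrite length_app; simpl; lia.
Qed.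

Lemma sp_extend {V} adj opp m (l : list V) e d :
  straight_path V adj opp m l -> 1 <= m ->
  adj (nth m l d) e -> opp (nth m l d) (nth (m-1) l d) e -> nth (m-1) l d <> e ->
  straight_path V adj opp (S m) (l ++ [e]).
Proof.
  intros [[Hl [_ [Hc Hn]]] Hs] Hm Ha Ho Hne.
  split; [split; [rewrite length_app; simpl; lia|split; [auto|split]]|].
  - apply chain_nth. intros d' i Hi. rewrite length_app in Hi; simpl in Hi.
    rewrite chain_nth in Hc.
    rewrite (nth_indep _ _ d) by (rewrite length_app; simpl; lia).
    rewrite (nth_indep _ d' d) by (rewrite length_app; simpl; lia).
    destruct (Nat.eq_dec i m) as [->|].
    + rewrite nth_app_lt by lia. rewrite <- Hl, nth_app_eq. exact Ha.
    + rewrite !nth_app_lt by lia. apply Hc. lia.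
  - apply nb_nth. intros d' i Hi. rewrite length_app in Hi; simpl in Hi.
    rewrite nb_nth in Hn.
    rewrite (nth_indep _ _ d) by (rewrite length_app; simpl; lia).
    rewrite (nth_indep _ d' d) by (rewrite length_app; simpl; lia).
    destruct (Nat.eq_dec i (m-1)) as [->|].
    + rewrite nth_app_lt by lia. replace (S (S (m-1))) with (length l) by lia.
      rewrite nth_app_eq. exact Hne.
    + rewrite !nth_app_lt by lia. apply Hn. lia.
  - apply st_nth. intros d' i Hi. rewrite length_app in Hi; simpl in Hi.
    rewrite st_nth in Hs.
    rewrite (nth_indep _ _ d) by (rewrite length_app; simpl; lia).
    rewrite (nth_indep _ d' d) by (rewrite length_app; simpl; lia).
    rewrite (nth_indep _ d' d) by (rewrite length_app; simpl; lia).
    destruct (Nat.eq_dec i (m-1)) as [->|].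
    + rewrite !nth_app_lt by lia. replace (S (S (m-1))) with (length l) by lia.
      rewrite nth_app_eq. replace (S (m-1)) with m by lia. exact Ho.
    + rewrite !nth_app_lt by lia. apply Hs. lia.
Qed.

Lemma decomp3 {V} (q : list V) m d :
  length q = S (S (S m)) -> exists l, q = nth 0 q d :: l ++ [nth (S m) q d; nth (S (S m)) q d].
Proof.
  intros H. destruct q as [|a q']; [discriminate|]. simpl in H |- *.
  destruct (exists_last (l:=q')) as [q1 [c Hc]]; [intros ->; discriminate|]. subst q'.
  rewrite length_app in H; simpl in H.
  destruct (exists_last (l:=q1)) as [q2 [b Hb]]; [intros ->; simpl in H; discriminate|]. subst q1.
  rewrite length_app in H; simpl in H.
  exists q2. f_equal. rewrite <- app_assoc. simpl. f_equal.
  rewrite !app_nth2 by lia. replace (m - length q2) with 0 by lia.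
  replace (S m - length q2) with 1 by lia. reflexivity.
Qed.
Open Scope Z_scope.

Section Circ.
Variables (V : Type) (adj : V -> V -> Prop) (opp : V -> V -> V -> Prop) (c : list V) (N : nat) (d : V).
Hypotheses (HN : (4 <= N)%nat) (Hlen : length c = S N) (Hcl : nth 0 c d = nth N c d)
 (Hsym : forall x y, adj x y -> adj y x) (Hirr: forall x, ~ adj x x)
 (Hchain : chain_in V adj c) (Hnb : no_backtrack V c)
 (Hst : forall k l, path_in V (circ_vert V c) (circ_edge V c) k l -> straight_seq V opp l).

Definition f (z : Z) : V := nth (Z.to_nat (z mod Z.of_nat N)) c d.

Lemma f_nat k : (k <= N)%nat -> f (Z.of_nat k) = nth k c d.
Proof.
  intros Hk. unfold f. destruct (Nat.eq_dec k N) as [->|Hne].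
  - rewrite Z.mod_same by lia. simpl. exact Hcl.
  - rewrite Z.mod_small by lia. rewrite Nat2Z.id. reflexivity.
Qed.

Lemma f_per z t : f (z + t * Z.of_nat N) = f z.
Proof. unfold f. rewrite Z.mod_add by lia. reflexivity. Qed.

Lemma f_red z : exists r, (r < N)%nat /\ f z = nth r c d /\ exists q, z = Z.of_nat r + q * Z.of_nat N.
Proof.
  exists (Z.to_nat (z mod Z.of_nat N)).
  pose proof (Z.mod_pos_bound z (Z.of_nat N) ltac:(lia)).
  split; [lia|split; [reflexivity|]].
  exists (z / Z.of_nat N). rewrite Z2Nat.id by lia.
  pose proof (Z.div_mod z (Z.of_nat N) ltac:(lia)). lia.
Qed.

Lemma circ_edge_sym u v : circ_edge V c u v -> circ_edge V c v u.
Proof. intros [i [Hi [H|H]]]; exists i; split; auto; tauto. Qed.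

Lemma f_edge z : circ_edge V c (f z) (f (z+1)).
Proof.
  destruct (f_red z) as [r [Hr [Hfz [q Hq]]]].
  assert (Hfz1 : f (z+1) = nth (S r) c d).
  { replace (z+1) with (Z.of_nat (S r) + q * Z.of_nat N) by lia.
    rewrite f_per. apply f_nat. lia. }
  exists r. split; [lia|]. left. rewrite Hfz, Hfz1.
  split; apply nth_error_nth'; lia.
Qed.

Lemma edge_f u v : circ_edge V c u v -> exists k, (f k = u /\ f (k+1) = v) \/ (f k = v /\ f (k+1) = u).
Proof.
  intros [i [Hi H]].
  assert (E1 : f (Z.of_nat i) = nth i c d) by (apply f_nat; lia).
  assert (E2 : f (Z.of_nat i + 1) = nth (S i) c d) by (rewrite <- f_nat by lia; f_equal; lia).
  exists (Z.of_nat i).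
  destruct H as [[H1 H2]|[H1 H2]];
  apply (nth_error_nth _ _ d) in H1; apply (nth_error_nth _ _ d) in H2;
  [left|right]; split; congruence.
Qed.

Lemma edge_adj u v : circ_edge V c u v -> adj u v.
Proof.
  intros [i [Hi H]]. rewrite chain_nth in Hchain. specialize (Hchain d i Hi).
  destruct H as [[H1 H2]|[H1 H2]];
  apply (nth_error_nth _ _ d) in H1; apply (nth_error_nth _ _ d) in H2; subst; auto.
Qed.

Lemma f_in z : In (f z) c.
Proof. destruct (f_red z) as [r [Hr [-> _]]]. apply nth_In. lia. Qed.

Lemma in_f x : In x c -> exists z, f z = x.
Proof.
  intros H. destruct (In_nth _ _ d H) as [i [Hi Hx]].
  exists (Z.of_nat i). rewrite f_nat by lia. exact Hx.
Qed.

Definition win (a dd : Z) (s : nat) : list V :=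
  map (fun i => f (a + dd * Z.of_nat i)) (seq 0 (S s)).

Lemma win_len a dd s : length (win a dd s) = S s.
Proof. unfold win. rewrite length_map, length_seq. reflexivity. Qed.

Lemma win_nth a dd s i d' : (i <= s)%nat -> nth i (win a dd s) d' = f (a + dd * Z.of_nat i).
Proof.
  intros Hi. unfold win. set (g := fun i : nat => f (a + dd * Z.of_nat i)).
  rewrite (nth_indep _ d' (g 0%nat)) by (rewrite length_map, length_seq; lia).
  rewrite map_nth. rewrite seq_nth by lia. reflexivity.
Qed.

Lemma win_sp a dd s : (dd = 1 \/ dd = -1) ->
  (forall i, (S (S i) <= s)%nat -> f (a + dd * Z.of_nat i) <> f (a + dd * Z.of_nat (S (S i)))) ->
  path_in V (circ_vert V c) (circ_edge V c) s (win a dd s) /\ straight_path V adj opp s (win a dd s).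
Proof.
  intros Hdd Hnbw.
  assert (Hce : chain_in V (circ_edge V c) (win a dd s)).
  { apply chain_nth. intros d' i Hi. rewrite win_len in Hi.
    rewrite !win_nth by lia.
    destruct Hdd as [->| ->].
    - replace (a + 1 * Z.of_nat (S i)) with ((a + 1 * Z.of_nat i) + 1) by lia. apply f_edge.
    - apply circ_edge_sym.
      replace (a + -1 * Z.of_nat i) with ((a + -1 * Z.of_nat (S i)) + 1) by lia. apply f_edge. }
  assert (Hnbl : no_backtrack V (win a dd s)).
  { apply nb_nth. intros d' i Hi. rewrite win_len in Hi. rewrite !win_nth by lia. apply Hnbw. lia. }
  assert (HP : path_in V (circ_vert V c) (circ_edge V c) s (win a dd s)).
  { split; [apply win_len|split; [|split; auto]].
    intros x Hx. unfold win in Hx. apply in_map_iff in Hx. destruct Hx as [i [<- _]]. apply f_in. }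
  split; auto. split; [|eapply Hst; eauto].
  split; [apply win_len|split; [auto|split; auto]].
  apply chain_nth. rewrite chain_nth in Hce. intros d' i Hi. apply edge_adj. apply Hce. auto.
Qed.


Variables (n : nat).
Hypotheses (HNn : N = (2*n)%nat)
 (VP2 : forall k, (1 <= k <= n - 1)%nat -> forall p, straight_path V adj opp k p ->
               forall j q, (j <= k)%nat -> straight_path V adj opp j q ->
               hd_error q = hd_error p -> last_error q = last_error p -> q = p).

Lemma fz k : (k <= N)%nat -> forall z, z = Z.of_nat k -> f z = nth k c d.
Proof. intros Hk z ->. apply f_nat; auto. Qed.

Lemma nbc i : (S (S i) <= N)%nat -> nth i c d <> nth (S (S i)) c d.
Proof. intros H. apply (proj1 (nb_nth _) Hnb). lia. Qed.

Lemma distinct i j : (i < j < N)%nat -> nth i c d <> nth j c d.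
Proof.
  intros Hij Heq.
  pose proof (proj1 (chain_nth _ _) Hchain) as Hch.
  destruct (Nat.eq_dec (j - i) 1) as [E1|E1].
  { apply (Hirr (nth i c d)). pose proof (Hch d i ltac:(lia)) as H.
    replace (S i) with j in H by lia. rewrite <- Heq in H. exact H. }
  destruct (Nat.eq_dec (j - i) (N-1)) as [E2|E2].
  { apply (Hirr (nth j c d)). pose proof (Hch d j ltac:(lia)) as H.
    replace (S j) with N in H by lia. rewrite <- Hcl in H.
    replace i with 0%nat in Heq by lia. rewrite Heq in H. exact H. }
  assert (Ht : exists t, (j - i = 2 * t \/ j - i = 2 * t + 1)%nat).
  { destruct (Nat.Even_or_Odd (j - i)) as [[t Ht]|[t Ht]]; exists t; lia. }
  destruct Ht as [t Ht].
  set (s := (j - i - t)%nat).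
  set (P1 := win (Z.of_nat i) 1 t).
  set (P2 := win (Z.of_nat j) (-1) s).
  assert (H1 : straight_path V adj opp t P1).
  { apply win_sp; [left; reflexivity|]. intros k Hk.
    rewrite (fz (i + k)) by lia. rewrite (fz (i + S (S k))) by lia.
    replace (i + S (S k))%nat with (S (S (i+k))) by lia. apply nbc. lia. }
  assert (H2 : straight_path V adj opp s P2).
  { apply win_sp; [right; reflexivity|]. intros k Hk.
    rewrite (fz (j - k)) by lia. rewrite (fz (j - S (S k))) by lia.
    replace (j - k)%nat with (S (S (j - S (S k)))) by lia. intro E; symmetry in E; revert E. apply nbc. lia. }
  assert (Heqp : P1 = P2).
  { apply (VP2 s ltac:(lia) P2 H2 t P1 ltac:(lia) H1).
    - rewrite !(hd_error_nth _ d).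
      2,3: intro E; apply (f_equal (@length V)) in E; unfold P1, P2 in E; rewrite win_len in E; discriminate.
      unfold P1, P2. rewrite !win_nth by lia. f_equal.
      rewrite (fz i) by lia. rewrite (fz j) by lia. exact Heq.
    - rewrite !(last_error_nth _ d).
      2,3: intro E; apply (f_equal (@length V)) in E; unfold P1, P2 in E; rewrite win_len in E; discriminate.
      unfold P1, P2. rewrite !win_len. cbn [pred]. rewrite !win_nth by lia. f_equal. f_equal. lia. }
  assert (Hts : t = s).
  { apply (f_equal (@length V)) in Heqp. unfold P1, P2 in Heqp. rewrite !win_len in Heqp. lia. }
  assert (Hn : nth (t - 1) P1 d = nth (t - 1) P2 d) by (rewrite Heqp; reflexivity).
  unfold P1, P2 in Hn. rewrite !win_nth in Hn by lia.
  rewrite (fz (i + (t - 1))) in Hn by lia. rewrite (fz (S (S (i + (t-1))))) in Hn by lia.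
  revert Hn. apply nbc. lia.
Qed.


Lemma f_inj a b : f a = f b -> exists t, a = b + t * Z.of_nat N.
Proof.
  intros E. destruct (f_red a) as [ra [Hra [Ea [qa Ha]]]]. destruct (f_red b) as [rb [Hrb [Eb [qb Hb]]]].
  assert (ra = rb).
  { destruct (Nat.lt_total ra rb) as [Hl|[Hl|Hl]]; auto; exfalso.
    - apply (distinct ra rb); [lia|congruence].
    - apply (distinct rb ra); [lia|congruence]. }
  subst rb. exists (qa - qb). rewrite Ha, Hb. ring.
Qed.

Lemma nbr b v : circ_edge V c (f b) v -> v = f (b+1) \/ v = f (b-1).
Proof.
  intros H. destruct (edge_f _ _ H) as [k [[E1 E2]|[E1 E2]]].
  - destruct (f_inj _ _ E1) as [t Ht]. left. rewrite <- E2.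
    replace (k+1) with ((b+1) + t * Z.of_nat N) by lia. apply f_per.
  - symmetry in E2. destruct (f_inj _ _ E2) as [t Ht]. right. rewrite <- E1.
    replace k with ((b-1) + (-t) * Z.of_nat N) by lia. apply f_per.
Qed.

Lemma walk l s a dd : (dd = 1 \/ dd = -1) -> path_in V (circ_vert V c) (circ_edge V c) s l -> (1 <= s)%nat ->
  nth 0 l d = f a -> nth 1 l d = f (a + dd) ->
  forall i, (i <= s)%nat -> nth i l d = f (a + dd * Z.of_nat i).
Proof.
  intros Hdd [Hl [_ [Hc Hn]]] Hs H0 H1.
  rewrite chain_nth in Hc. rewrite nb_nth in Hn.
  assert (forall i, (S i <= s)%nat -> nth i l d = f (a + dd * Z.of_nat i) /\ nth (S i) l d = f (a + dd * Z.of_nat (S i))).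
  { induction i as [|i IH]; intros Hi.
    - split. rewrite H0. f_equal. lia. rewrite H1. f_equal. lia.
    - destruct (IH ltac:(lia)) as [A B]. split; auto.
      pose proof (Hc d (S i) ltac:(lia)) as E. rewrite B in E.
      destruct (nbr _ _ E) as [F|F]; destruct Hdd as [-> | ->].
      + rewrite F. f_equal. lia.
      + exfalso. apply (Hn d i ltac:(lia)). rewrite A, F. f_equal. lia.
      + exfalso. apply (Hn d i ltac:(lia)). rewrite A, F. f_equal. lia.
      + rewrite F. f_equal. lia. }
  intros i Hi. destruct i as [|i]. { rewrite H0. f_equal. lia. } apply H. lia.
Qed.

Lemma circ_main p : (2 <= n)%nat -> path_in V (circ_vert V c) (circ_edge V c) (S n) p ->
  exists q, straight_path V adj opp n q /\ nth 0 q d = nth 0 p d /\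
    nth (n-1) q d = nth (S n) p d /\ nth n q d = nth n p d.
Proof.
  intros Hn2 HP.
  assert (Hp : exists a dd, (dd = 1 \/ dd = -1) /\ nth 0 p d = f a /\ nth 1 p d = f (a + dd)).
  { destruct HP as [Hl [_ [Hc _]]]. rewrite chain_nth in Hc.
    destruct (edge_f _ _ (Hc d 0%nat ltac:(lia))) as [k [[E1 E2]|[E1 E2]]].
    - exists k, 1. auto.
    - exists (k+1), (-1). split; auto. split; auto. rewrite <- E1. f_equal. lia. }
  destruct Hp as [a [dd [Hdd [E0 E1]]]].
  pose proof (walk p (S n) a dd Hdd HP ltac:(lia) E0 E1) as W.
  exists (win a (-dd) n).
  split.
  - apply win_sp. destruct Hdd; [right|left]; lia.
    intros k Hk E. destruct (f_inj _ _ E) as [t Ht].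
    assert (HM : Z.of_nat N >= 4) by lia.
    destruct (Z.lt_trichotomy t 0) as [Tt|[Tt|Tt]]; destruct Hdd; subst dd; try subst t; nia.
  - rewrite !win_nth by lia. rewrite !W by lia.
    split; [f_equal; lia|split].
    + rewrite <- (f_per (a + dd * Z.of_nat (S n)) (-dd)). f_equal. rewrite HNn. destruct Hdd; subst dd; lia.
    + rewrite <- (f_per (a + dd * Z.of_nat n) (-dd)). f_equal. rewrite HNn. destruct Hdd; subst dd; lia.
Qed.

End Circ.
Close Scope Z_scope.

Lemma last_error_app {V} (l : list V) a : last_error (l ++ [a]) = Some a.
Proof.
  rewrite (last_error_nth _ a). 2: destruct l; discriminate.
  rewrite length_app. simpl. replace (pred (length l + 1)) with (length l) by lia.
  rewrite nth_app_eq. reflexivity.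
Qed.

Lemma circ_lemma V adj opp n (hn : 2 <= n) (hG : veldkamp_ngon adj opp n) p d :
  straight_path V adj opp (S n) p ->
  exists q, straight_path V adj opp n q /\ nth 0 q d = nth 0 p d /\
    nth (n-1) q d = nth (S n) p d /\ nth n q d = nth n p d.
Proof.
  intros Hp.
  destruct hG as [_ [[[Hsym Hirr] _] [_ [_ [VP2 VP3]]]]].
  destruct (VP3 p Hp) as [c [[[_ [[Hl [_ [Hch Hnb]]] Hhl]] Hst] HP]].
  assert (Hcl : nth 0 c d = nth (2*n) c d).
  { rewrite (hd_error_nth _ d) in Hhl by (intro E; subst; discriminate).
    rewrite (last_error_nth _ d) in Hhl by (intro E; subst; discriminate).
    rewrite Hl in Hhl. simpl in Hhl. replace (n + (n + 0)) with (2*n) in Hhl by lia. congruence. }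
  eapply (circ_main V adj opp c (2*n) d); eauto; lia.
Qed.

Theorem proposition2p10 (V : Type) (adj : V -> V -> Prop) (opp : V -> V -> V -> Prop)
  (n : nat) (hn : 2 <= n) (hG : veldkamp_ngon adj opp n)
  (x y z : V) (hxy : opposite adj opp n x y) (hz : adj y z) :
  exists! r : list V, root adj opp n r /\
    exists l : list V, r = x :: l ++ [z; y].
Proof.
  pose proof hG as hG'.
  destruct hG' as [_ [[[Hsym Hirr] Hv] [_ [_ [VP2 VP3]]]]].
  destruct hxy as [r [Hr [Hhd Hlast]]].
  unfold root in Hr.
  assert (Hrl : length r = S n) by apply Hr.
  assert (Hr0 : nth 0 r x = x).
  { rewrite (hd_error_nth _ x) in Hhd by (intro E; subst; discriminate). congruence. }
  assert (Hrn : nth n r x = y).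
  { rewrite (last_error_nth _ x) in Hlast by (intro E; subst; discriminate).
    rewrite Hrl in Hlast. simpl in Hlast. congruence. }
  set (w := nth (n-1) r x).
  assert (Hwy : adj y w).
  { apply Hsym. destruct Hr as [[_ [_ [Hc _]]] _]. rewrite chain_nth in Hc.
    rewrite <- Hrn. unfold w. replace n with (S (n-1)) at 2 by lia. apply Hc. lia. }
  destruct (Hv y) as [[Hop1 [Hop2 Hop3]] Hpl].
  destruct (Hpl [w; z] ltac:(simpl; lia)) as [c0 [Hyc Hc0]].
  { intros s [<-|[<-|[]]]; auto. }
  assert (Ocw : opp y c0 w) by (apply Hc0; simpl; auto).
  assert (Ocz : opp y c0 z) by (apply Hc0; simpl; auto).
  assert (Hp1 : straight_path V adj opp (S n) (r ++ [c0])).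
  { apply sp_extend with (d := x); auto; try lia.
    - rewrite Hrn. auto.
    - rewrite Hrn. apply Hop2. exact Ocw.
    - fold w. intro E. rewrite E in Ocw. apply (Hop3 c0). exact Ocw. }
  destruct (circ_lemma V adj opp n hn hG _ x Hp1) as [q1 [Hq1 [A0 [A1 A2]]]].
  rewrite nth_app_lt in A0 by lia. rewrite nth_app_lt in A2 by lia.
  rewrite <- Hrl, nth_app_eq in A1.
  assert (Hq1l : length q1 = S n) by apply Hq1.
  assert (Hp2 : straight_path V adj opp (S n) (q1 ++ [z])).
  { apply sp_extend with (d := x); auto; try lia.
    - rewrite A2, Hrn. auto.
    - rewrite A2, Hrn, A1. exact Ocz.
    - rewrite A1. intro E. rewrite E in Ocz. apply (Hop3 z). exact Ocz. }
  destruct (circ_lemma V adj opp n hn hG _ x Hp2) as [q2 [Hq2 [B0 [B1 B2]]]].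
  rewrite nth_app_lt in B0 by lia. rewrite nth_app_lt in B2 by lia.
  rewrite <- Hq1l, nth_app_eq in B1.
  assert (Hq2l : length q2 = S n) by apply Hq2.
  destruct (decomp3 q2 (n-2) x ltac:(lia)) as [l Hl].
  replace (S (n-2)) with (n-1) in Hl by lia. replace (S (S (n-2))) with n in Hl by lia.
  replace (S (n - 1)) with n in Hl by lia. rewrite B0, A0, Hr0, B1, B2, A2, Hrn in Hl.
  exists q2. split.
  - split; [exact Hq2|exists l; exact Hl].
  - intros r' [Hr' [l' Hl']].
    assert (K : forall l0, straight_path V adj opp n (x :: l0 ++ [z; y]) ->
              straight_path V adj opp (n-1) (x :: l0 ++ [z])).
    { intros l0 H. apply (sp_prefix adj opp (n-1) _ y).
      replace (S (n-1)) with n by lia. replace ((x :: l0 ++ [z]) ++ [y]) with (x :: l0 ++ [z; y]); auto.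
      simpl. rewrite <- app_assoc. reflexivity. }
    assert (E : x :: l' ++ [z] = x :: l ++ [z]).
    { apply (VP2 (n-1) ltac:(lia) _ (K l ltac:(rewrite <- Hl; exact Hq2)) (n-1) _ (le_n _)
             (K l' ltac:(rewrite <- Hl'; exact Hr'))).
      - reflexivity.
      - change (x :: l' ++ [z]) with ((x :: l') ++ [z]). change (x :: l ++ [z]) with ((x :: l) ++ [z]).
        rewrite !last_error_app. reflexivity. }
    injection E as E. apply app_inj_tail in E. destruct E as [-> _].
    rewrite Hl, Hl'. reflexivity.
Qed.
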